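(* Let $m\geq 17$ and $k\geq 1$ be integers and let $c(x)=1+\sum_{j\in\{1,3,5,6,8\}}(x^j+x^{m-j})\in\mathbb{F}_2[x]$. Then $\gcd(c(x^k),x^m-1)=1$ if and only if $\gcd(m,3k)=\gcd(m,7k)=\gcd(m,k)$.
   Context: All polynomials are over $\mathbb{F}_2$. *)

(* Defs.v *)
From HB Require Import structures.
From mathcomp Require Import all_boot all_order all_algebra.
Set Implicit Arguments. Unset Strict Implicit. Unset Printing Implicit Defensive.
Import GRing.Theory.
Local Open Scope ring_scope.

Definition cpoly (m : nat) : {poly 'F_2} :=
  1 + \sum_(j <- [:: 1; 3; 5; 6; 8]%N) ('X^j + 'X^(m - j)).

(* Main.v *)
Require Import Defs.
From HB Require Import structures.
From mathcomp Require Import all_boot all_order all_algebra.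
From mathcomp Require Import ring zify.
Import GRing.Theory.
Local Open Scope ring_scope.

Section Gen.
Variable F : fieldType.

Lemma L1 (a b : nat) : ('X^a - 1 : {poly F}) %| 'X^(a * b) - 1.
Proof.
by rewrite exprM (subrX1 ('X^a)) dvdp_mulIl.
Qed.

Lemma L2 (p : {poly F}) (a b : nat) : (0 < a)%N ->
  p %| 'X^a - 1 -> p %| 'X^b - 1 -> p %| 'X^(gcdn a b) - 1.
Proof.
move=> a0 pa pb; case: (egcdnP b a0) => km kn E _.
have h1 : p %| 'X^(km * a) - 1 by apply: dvdp_trans pa _; rewrite mulnC L1.
have h2 : p %| 'X^(kn * b) - 1 by apply: dvdp_trans pb _; rewrite mulnC L1.
have -> : ('X^(gcdn a b) - 1 : {poly F}) = ('X^(km * a) - 1) - 'X^(gcdn a b) * ('X^(kn * b) - 1).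
  by rewrite E exprD; ring.
by rewrite dvdp_sub // dvdp_mull.
Qed.

Lemma L3 (n k : nat) : (n%:R : F) = 1 ->
  coprimep ('X^k - 1 : {poly F}) (\sum_(i < n) ('X^k) ^+ i).
Proof.
move=> hn.
have : ('X^k - 1 : {poly F}) %| \sum_(i < n) (('X^k) ^+ i - 1).
  apply: (big_ind (fun r : {poly F} => 'X^k - 1 %| r)) => [|x y|i _]; [exact: dvdp0|exact: dvdp_add|by rewrite -exprM L1].
case/dvdpP=> q Hq.
have -> : (\sum_(i < n) ('X^k) ^+ i : {poly F}) = q * ('X^k - 1) + 1.
  rewrite -Hq sumrB sumr_const card_ord -addrA.
  suff -> : (1 : {poly F}) *+ n = 1 by rewrite addNr addr0.
  by rewrite -polyC1 -polyCMn -mulr_natl mulr1 hn.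
by rewrite coprimep_addl_mul coprimep1.
Qed.

Lemma sizeXn1 (a : nat) : (0 < a)%N -> size ('X^a - 1 : {poly F}) = a.+1.
Proof. move=> a0; rewrite size_XnsubC //. Qed.

Lemma L4 (n m k : nat) : (n%:R : F) = 1 -> (0 < m)%N -> (0 < k)%N ->
  coprimep (\sum_(i < n) ('X^k) ^+ i : {poly F}) ('X^m - 1) <->
  gcdn m (n * k) = gcdn m k.
Proof.
move=> hn m0 k0.
have fac : ('X^(n * k) - 1 : {poly F}) = ('X^k - 1) * \sum_(i < n) ('X^k) ^+ i.
  by rewrite mulnC exprM subrX1.
split.
- move=> cop.
  set g1 := gcdn m (n * k).
  have g10 : (0 < g1)%N by rewrite gcdn_gt0 m0.
  have D1 : ('X^g1 - 1 : {poly F}) %| 'X^m - 1.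
    by have := L1 g1 (m %/ g1); rewrite mulnC divnK // dvdn_gcdl.
  have D2 : ('X^g1 - 1 : {poly F}) %| 'X^(n * k) - 1.
    by have := L1 g1 ((n * k) %/ g1); rewrite mulnC divnK // dvdn_gcdr.
  have cD : coprimep ('X^g1 - 1 : {poly F}) (\sum_(i < n) ('X^k) ^+ i).
    by rewrite coprimep_sym; apply: coprimep_dvdl D1 cop.
  have D3 : ('X^g1 - 1 : {poly F}) %| 'X^k - 1.
    by rewrite -(Gauss_dvdpl _ cD) -fac.
  have D4 := L2 _ _ _ m0 D1 D3.
  have gk0 : (0 < gcdn m k)%N by rewrite gcdn_gt0 m0.
  have nz : ('X^(gcdn m k) - 1 : {poly F}) != 0.
    by rewrite -size_poly_eq0 sizeXn1.
  have := dvdp_leq nz D4.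
  rewrite !sizeXn1 // ltnS => le1.
  have le2 : (gcdn m k <= g1)%N.
    by apply: dvdn_leq => //; rewrite dvdn_gcd dvdn_gcdl dvdn_mull // dvdn_gcdr.
  by apply/eqP; rewrite eqn_leq le2 andbT.
- move=> E; apply/coprimepP => d dB dM.
  have dnk : d %| 'X^(n * k) - 1 by rewrite fac; apply: dvdp_mull.
  have := L2 _ _ _ m0 dM dnk; rewrite E => dg.
  have dk : d %| 'X^k - 1.
    by apply: dvdp_trans dg _; have := L1 (gcdn m k) (k %/ gcdn m k); rewrite mulnC divnK // dvdn_gcdr.
  by move/coprimepP: (L3 _ k hn); apply.
Qed.
End Gen.

Lemma cX (F : fieldType) m : (0 < m)%N -> coprimep ('X : {poly F}) ('X^m - 1).
Proof.
move=> m0; rewrite coprimep_sym -[X in coprimep _ X]subr0 -polyC0 coprimep_XsubC.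
by rewrite /root !hornerE expr0n eqn0Ngt m0 sub0r oppr_eq0 oner_eq0.
Qed.
Lemma aux (a b c : {poly 'F_2}) : (1 + 1 : {poly 'F_2}) = 0 -> a = b + (1 + 1) * c -> a = b.
Proof. by move=> h ->; rewrite h mul0r addr0. Qed.

Lemma key (m k : nat) (hm : (17 <= m)%N) : let y := ('X^k : {poly 'F_2}) in
  y ^+ 8 * (cpoly m \Po y) =
  (\sum_(i < 3) y ^+ i) ^+ 5 * (\sum_(i < 7) y ^+ i)
  + (y ^+ m - 1) * (y ^+ 7 + y ^+ 5 + y ^+ 3 + y ^+ 2 + 1).
Proof.
move=> y.
rewrite /cpoly !big_cons big_nil !comp_polyD comp_poly0 -polyC1 comp_polyC !comp_Xn_poly polyC1.
have em : y ^+ m = y ^+ (m - 8) * y ^+ 8 by rewrite -exprD; congr (_ ^+ _); lia.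
set w := y ^+ (m - 8).
have ex : forall j, (j <= 8)%N -> y ^+ (m - j) = w * y ^+ (8 - j).
  by move=> j hj; rewrite /w -exprD; congr (_ ^+ _); lia.
rewrite em !ex // !big_ord_recr big_ord0 /=.
have two : (1 + 1 : {poly 'F_2}) = 0.
  by rewrite -polyC1 -polyCD (_ : (1 + 1 : 'F_2) = 0) //; apply/eqP.
apply: (@aux _ _ (- (3%:R * y + 10%:R * y^+2 + 25%:R * y^+3 + 48%:R * y^+4 + 73%:R * y^+5 + 96%:R * y^+6 + 110%:R * y^+7 + 115%:R * y^+8 + 110%:R * y^+9 + 96%:R * y^+10 + 73%:R * y^+11 + 48%:R * y^+12 + 25%:R * y^+13 + 10%:R * y^+14 + 3%:R * y^+15)) two).
ring.
Qed.

Theorem proposition8 (m k : nat) (hm : (17 <= m)%N) (hk : (1 <= k)%N) :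
  coprimep ((cpoly m) \Po 'X^k) ('X^m - 1) <->
  (gcdn m (3 * k) = gcdn m k /\ gcdn m (7 * k) = gcdn m k).
Proof.
have m0 : (0 < m)%N by apply: leq_trans hm.
have H := key m k hm; move: H => /=.
set y := ('X^k : {poly 'F_2}) => H.
have cy8 : coprimep (y ^+ 8) ('X^m - 1) := coprimep_expl 8 (coprimep_expl k (cX _ _ m0)).
rewrite -(andTb (coprimep (cpoly m \Po y) _)) -cy8 -coprimepMl H.
have : ('X^m - 1 : {poly 'F_2}) %| y ^+ m - 1.
  by rewrite /y -exprM mulnC L1.
case/dvdpP => Q ->.
set M := ('X^m - 1 : {poly 'F_2}).
set G1 := \sum_(i < 3) y ^+ i. set G2 := \sum_(i < 7) y ^+ i.
set R := (y ^+ 7 + _ + _ + _ + _).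
rewrite coprimep_sym (mulrAC Q M R) (addrC _ (_ * M)) coprimep_addl_mul.
rewrite coprimep_sym coprimepMl coprimep_pexpl //.
have h3 : (3%:R : 'F_2) = 1 by apply/eqP.
have h7 : (7%:R : 'F_2) = 1 by apply/eqP.
split.
- by case/andP => /(L4 _ _ _ _ h3 m0 hk) -> /(L4 _ _ _ _ h7 m0 hk) ->.
- by case => /(L4 _ _ _ _ h3 m0 hk) -> /(L4 _ _ _ _ h7 m0 hk) ->.
Qed.
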